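(* Let $n\in\mathbb{N}$, $n\geq 2$, let $l\in(0,\frac{2}{n})$ and let $\alpha$ satisfy $\frac{2}{n}\leq\alpha<1+\frac{1}{n}-\frac{l}{2}$. Let $\theta$ with $1<\theta<\frac{n}{n-2}$ and $\mu>\frac{n}{2}$ be such that $$\frac{l(2\mu-1)}{4\mu-n}<\frac{n(\theta+1-2\alpha\theta)+2\theta}{2n\theta+n^2-n^2\theta},$$ and let $\theta'=\frac{\theta}{\theta-1}$, $\mu'=\frac{\mu}{\mu-1}$ be the conjugate exponents. Then there exist $p\in[1,\infty)$ and $q\in[1,\infty)$ such that the numbers $$a_1=\frac{\frac{np}{2}\big(1-\frac{1}{(p+2\alpha-2)\theta}\big)}{1-\frac n2+\frac{np}{2}},\quad a_2=\frac{nq\big(\frac1n-\frac{1}{2\theta'}\big)}{1-\frac n2+q},\quad a_3=\frac{\frac{np}{2l}\big(1-\frac{1}{2\mu}\big)}{1-\frac n2+\frac{np}{2l}},$$ $$a_4=\frac{nq\big(\frac1n-\frac{1}{2(q-1)\mu'}\big)}{1-\frac n2+q},\quad \kappa_1=\frac{\frac{np}{2}\big(1-\frac1p\big)}{1-\frac n2+\frac{np}{2}},\quad \kappa_2=\frac{q-\frac n2}{1-\frac n2+q}$$ all belong to $(0,1)$, and moreover $$\frac{p-2+2\alpha}{p}a_1+\frac1q a_2\in(0,1)\quad\text{and}\quad \frac{2l}{p}a_3+\frac{q-1}{q}a_4\in(0,1).$$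
   Context: For $n=2$ the condition $1<\theta<\frac{n}{n-2}$ is understood as $\theta>1$. *)

(* Defs.v *)
From Stdlib Require Export Reals Lra Lia.
Open Scope R_scope.

Definition in01 (x : R) : Prop := 0 < x < 1.

Definition conj_exp (s : R) : R := s / (s - 1).

Section Exps.
Variables (n : nat) (l alpha theta mu p q : R).
Let N := INR n.

Definition a1 : R :=
  (N * p / 2 * (1 - 1 / ((p + 2 * alpha - 2) * theta))) / (1 - N / 2 + N * p / 2).
Definition a2 : R :=
  (N * q * (1 / N - 1 / (2 * conj_exp theta))) / (1 - N / 2 + q).
Definition a3 : R :=
  (N * p / (2 * l) * (1 - 1 / (2 * mu))) / (1 - N / 2 + N * p / (2 * l)).
Definition a4 : R :=
  (N * q * (1 / N - 1 / (2 * (q - 1) * conj_exp mu))) / (1 - N / 2 + q).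
Definition kappa1 : R :=
  (N * p / 2 * (1 - 1 / p)) / (1 - N / 2 + N * p / 2).
Definition kappa2 : R :=
  (q - N / 2) / (1 - N / 2 + q).
End Exps.

(* Main.v *)
Require Import Defs.
From Stdlib Require Import Reals.
Open Scope R_scope.

Lemma in01_frac x y : 0 < x -> x < y -> in01 (x / y).
Proof.
  intros. unfold in01. split.
  - apply Rdiv_lt_0_compat; lra.
  - apply (Rmult_lt_reg_r y); [lra|]. unfold Rdiv.
    rewrite Rmult_assoc, Rinv_l by lra. lra.
Qed.

Definition ev (P : R -> Prop) := exists T, forall t, T <= t -> P t.

Lemma ev_lin a b : 0 < a -> ev (fun t => 0 < a * t + b).
Proof.
  intros Ha. exists ((Rabs b + 1) / a). intros t Ht.
  assert (H1 : a * ((Rabs b + 1) / a) = Rabs b + 1) by (field; lra).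
  assert (H2 : a * ((Rabs b + 1) / a) <= a * t) by (apply Rmult_le_compat_l; lra).
  assert (H3 := Rle_abs (-b)). rewrite Rabs_Ropp in H3. lra.
Qed.

Lemma ev_and P Q : ev P -> ev Q -> ev (fun t => P t /\ Q t).
Proof.
  intros [T1 H1] [T2 H2]. exists (Rmax T1 T2). intros t Ht. split.
  - apply H1. apply Rle_trans with (Rmax T1 T2); [apply Rmax_l | exact Ht].
  - apply H2. apply Rle_trans with (Rmax T1 T2); [apply Rmax_r | exact Ht].
Qed.

Lemma pick_r K E L F : 0 < K -> 0 < E -> 0 < L -> 0 < F -> K * L < E * F ->
  exists r, 0 < r /\ K < r * E /\ L * r < F.
Proof.
  intros HK HE HL HF H.
  assert (Hx : K / E * E = K) by (field; lra).
  assert (Hy : F / L * L = F) by (field; lra).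
  assert (Hx0 : 0 < K / E) by (apply Rdiv_lt_0_compat; lra).
  assert (Hy0 : 0 < F / L) by (apply Rdiv_lt_0_compat; lra).
  assert (Hxy : K / E < F / L).
  { assert (Hp : (F / L - K / E) * (E * L) = F * E - K * L) by (field; lra).
    assert (0 < E * L) by nra.
    destruct (Rlt_or_le (K/E) (F/L)) as [h|h]; [exact h|].
    assert ((F / L - K / E) * (E * L) <= 0) by nra. nra. }
  exists ((K / E + F / L) / 2). split; [lra|]. split; nra.
Qed.

Lemma cross a b c d : 0 < b -> 0 < d -> a / b < c / d -> a * d < c * b.
Proof.
  intros Hb Hd H.
  apply Rmult_lt_compat_r with (r := b * d) in H; [|nra].
  replace (a / b * (b * d)) with (a * d) in H by (field; lra).
  replace (c / d * (b * d)) with (c * b) in H by (field; lra). exact H.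
Qed.

Theorem lemma4p6 (n : nat) (l alpha theta mu : R) :
  (2 <= n)%nat ->
  0 < l < 2 / INR n ->
  2 / INR n <= alpha < 1 + 1 / INR n - l / 2 ->
  1 < theta ->
  ((2 < n)%nat -> theta < INR n / (INR n - 2)) ->
  INR n / 2 < mu ->
  l * (2 * mu - 1) / (4 * mu - INR n) <
    (INR n * (theta + 1 - 2 * alpha * theta) + 2 * theta) /
    (2 * INR n * theta + INR n ^ 2 - INR n ^ 2 * theta) ->
  exists p q : R, 1 <= p /\ 1 <= q /\
    in01 (a1 n alpha theta p) /\
    in01 (a2 n theta q) /\
    in01 (a3 n l mu p) /\
    in01 (a4 n mu q) /\
    in01 (kappa1 n p) /\
    in01 (kappa2 n q) /\
    in01 ((p - 2 + 2 * alpha) / p * a1 n alpha theta p + 1 / q * a2 n theta q) /\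
    in01 (2 * l / p * a3 n l mu p + (q - 1) / q * a4 n mu q).
Proof.
  intros Hn [Hl0 Hl1] [Ha0 Ha1] Hth Hthn Hmu Hkey.
  assert (HN : 2 <= INR n).
  { apply le_INR in Hn. replace (INR 2) with 2 in Hn by (simpl; lra). exact Hn. }
  assert (HK : (INR n - 2) * theta < INR n).
  { destruct (Nat.eq_dec n 2) as [e|ne].
    - subst n. simpl. lra.
    - assert (h : (2 < n)%nat) by lia.
      assert (h3 : 3 <= INR n).
      { apply le_INR in h. replace (INR 3) with 3 in h by (simpl; lra). exact h. }
      specialize (Hthn h).
      apply Rmult_lt_compat_r with (r := INR n - 2) in Hthn; [|lra].
      replace (INR n / (INR n - 2) * (INR n - 2)) with (INR n) in Hthn by (field; lra).
      lra. }
  clear Hthn Hn.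
  unfold a1, a2, a3, a4, kappa1, kappa2, conj_exp.
  set (N := INR n) in *.
  assert (Hl1' : l < 1).
  { assert (N * (2 / N) = 2) by (field; lra).
    assert (0 < 2 / N) by (apply Rdiv_lt_0_compat; lra). nra. }
  set (K := N - (N - 2) * theta).
  set (E := N * (theta + 1 - 2 * alpha * theta) + 2 * theta).
  set (L := N * l * (2 * mu - 1)).
  set (F := 4 * mu - N).
  assert (HKp : 0 < K) by (unfold K; lra).
  assert (HFp : 0 < F) by (unfold F; lra).
  assert (HLp : 0 < L) by (unfold L; apply Rmult_lt_0_compat; [apply Rmult_lt_0_compat|]; lra).
  assert (Hden : 2 * N * theta + N ^ 2 - N ^ 2 * theta = N * K) by (unfold K; ring).
  rewrite Hden in Hkey.
  apply cross in Hkey; [| lra | nra].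
  assert (HKL : K * L < E * F).
  { assert (K * L = l * (2 * mu - 1) * (N * K)) by (unfold L; ring).
    unfold F, E. lra. }
  assert (HEp : 0 < E).
  { assert (0 < K * L) by nra. nra. }
  destruct (pick_r K E L F HKp HEp HLp HFp HKL) as [r [Hr0 [HrE HrF]]].
  set (A := 1 - N / 2).
  assert (HA : A <= 0) by (unfold A; lra).
  set (b3 := (- 2 * A / N + 2 * alpha - 2) * theta - 1).
  assert (Hev : ev (fun t => (0 < 1 * t + -2 /\ 0 < r * t + -2) /\
     ((0 < 2 * theta / N * t + b3 /\ 0 < (1 - (N/2 - 1) * (2 * theta / N)) * t + - (N/2 - 1) * b3)
     /\ (0 < r * N * (theta - 1) * t + (- A * N * (theta - 1) + 2 * theta * A)
     /\ 0 < 1 * t + (- A + 2 * mu * l * A))))).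
  { repeat apply ev_and; apply ev_lin; try lra.
    - apply Rmult_lt_0_compat; [lra|]. apply Rinv_0_lt_compat; lra.
    - assert (h : (1 - (N/2 - 1) * (2 * theta / N)) * N = K) by (unfold K; field; lra).
      destruct (Rlt_or_le 0 (1 - (N/2 - 1) * (2 * theta / N))) as [h'|h']; [exact h'|].
      nra.
    - assert (0 < r * N) by nra. nra. }
  destruct Hev as [T HT]. specialize (HT T (Rle_refl T)).
  set (t := T) in *.
  destruct HT as [[Ht Hrt] [[H3 H4] [H5 H6]]].
  set (p := 2 * (t - A) / N).
  set (q := r * t - A).
  set (u := (p + 2 * alpha - 2) * theta).
  assert (Hp : N * p / 2 = t - A) by (unfold p; field; lra).
  assert (Hp1 : 1 < p) by (unfold p, A; apply (Rmult_lt_reg_r N); [lra|];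
                           unfold Rdiv; rewrite Rmult_assoc, Rinv_l by lra; lra).
  assert (Hq : 1 - N / 2 + q = r * t) by (unfold q, A; ring).
  assert (Hq1 : N / 2 + 1 < q) by (unfold q, A; lra).
  assert (Hu : 1 < u).
  { assert (u - 1 = 2 * theta / N * t + b3) by (unfold u, b3, p; field; lra). lra. }
  assert (H4' : 0 < t - (N/2 - 1) * (u - 1)).
  { assert (t - (N/2 - 1) * (u - 1) = (1 - (N/2 - 1) * (2 * theta / N)) * t + - (N/2 - 1) * b3)
      by (unfold u, b3, p; field; lra). lra. }
  assert (H5' : 0 < q * N * (theta - 1) + 2 * theta * A) by (unfold q; nra).
  assert (HtA : 0 < t - A) by lra.
  assert (HD : t <= t - A + l * A) by nra.
  assert (E1 : N * p / 2 * (1 - 1 / ((p + 2 * alpha - 2) * theta)) / (1 - N / 2 + N * p / 2)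
              = (t - A) * (u - 1) / (u * t)).
  { fold u. rewrite Hp. unfold A. field. lra. }
  assert (E2 : N * q * (1 / N - 1 / (2 * (theta / (theta - 1)))) / (1 - N / 2 + q)
              = q * K / (2 * theta * (r * t))).
  { rewrite Hq. unfold K. field. repeat split; lra. }
  assert (E3 : N * p / (2 * l) * (1 - 1 / (2 * mu)) / (1 - N / 2 + N * p / (2 * l))
              = (t - A) * (2 * mu - 1) / (2 * mu * (t - A + l * A))).
  { replace (N * p / (2 * l)) with ((t - A) / l) by (rewrite <- Hp; field; lra).
    unfold A. field. repeat split; try lra. unfold A in HD. lra. }
  assert (E4 : N * q * (1 / N - 1 / (2 * (q - 1) * (mu / (mu - 1)))) / (1 - N / 2 + q)
              = q * (2 * (q - 1) * mu - N * (mu - 1)) / (2 * (q - 1) * mu * (r * t))).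
  { rewrite Hq. field. repeat split; lra. }
  assert (E5 : N * p / 2 * (1 - 1 / p) / (1 - N / 2 + N * p / 2) = (t - 1) / t).
  { unfold p. unfold A in *. field. repeat split; lra. }
  assert (Hq4 : 0 < 2 * (q - 1) * mu - N * (mu - 1)) by nra.
  assert (Hudef : u = (p + 2*alpha - 2)*theta) by reflexivity.
  assert (HAdef : A = 1 - N/2) by reflexivity.
  clearbody u q p t A.
  exists p, q. rewrite HAdef. rewrite E1, E2, E3, E4, E5. split; [lra|]. split; [lra|].
  assert (Hq0 : 0 < q) by lra.
  assert (Hpa : 0 < p + 2 * alpha - 2).
  { destruct (Rlt_or_le 0 (p + 2 * alpha - 2)) as [h|h]; [exact h|].
    assert (0 <= (-(p + 2 * alpha - 2)) * theta) by (apply Rmult_le_pos; lra).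
    assert ((-(p + 2 * alpha - 2)) * theta = - u) by (rewrite Hudef; ring). lra. }
  split.
  { apply in01_frac. apply Rmult_lt_0_compat; lra.
    assert (u * t - (t - A) * (u - 1) = t - (N/2 - 1) * (u - 1)) by (rewrite HAdef; ring). lra. }
  split.
  { apply in01_frac. apply Rmult_lt_0_compat; lra.
    assert (2 * theta * (r * t) - q * K = q * N * (theta - 1) + 2 * theta * A)
      by (rewrite <- Hq; unfold K; rewrite HAdef; ring). lra. }
  split.
  { apply in01_frac. apply Rmult_lt_0_compat; lra.
    assert (2 * mu * (t - A + l * A) - (t - A) * (2 * mu - 1) = t - A + 2 * mu * l * A) by ring.
    lra. }
  split.
  { apply in01_frac. apply Rmult_lt_0_compat; lra.
    assert (2 * (q - 1) * mu * (r * t) - q * (2 * (q - 1) * mu - N * (mu - 1))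
            = q * (2 * mu - N) + mu * (N - 2)) by (rewrite <- Hq; field).
    assert (0 < q * (2 * mu - N)) by (apply Rmult_lt_0_compat; lra).
    assert (0 <= mu * (N - 2)) by (apply Rmult_le_pos; lra). lra. }
  split.
  { apply in01_frac; lra. }
  split.
  { apply in01_frac; lra. }
  split.
  { replace ((p - 2 + 2 * alpha) / p * ((t - A) * (u - 1) / (u * t)) + 1 / q * (q * K / (2 * theta * (r * t))))
      with ((r * N * (u - 1) + K) / (2 * theta * (r * t))).
    2:{ rewrite <- Hp. rewrite Hudef. field. repeat split; lra. }
    apply in01_frac.
    { assert (0 < r * N * (u - 1)) by (apply Rmult_lt_0_compat; [apply Rmult_lt_0_compat|]; lra). lra. }
    assert (2 * theta * (r * t) - (r * N * (u - 1) + K) = r * E - K).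
    { rewrite Hudef. unfold E, K. replace t with (N * p / 2 + A) by lra. rewrite HAdef. field. }
    lra. }
  { replace (2 * l / p * ((t - A) * (2 * mu - 1) / (2 * mu * (t - A + l * A))) +
             (q - 1) / q * (q * (2 * (q - 1) * mu - N * (mu - 1)) / (2 * (q - 1) * mu * (r * t))))
      with ((L * (r * t) + (2 * (q - 1) * mu - N * (mu - 1)) * (t - A + l * A))
            / (2 * mu * (t - A + l * A) * (r * t))).
    2:{ rewrite <- Hp. unfold L. field. repeat split; try lra. }
    apply in01_frac.
    { assert (0 < L * (r * t)) by (apply Rmult_lt_0_compat; lra).
      assert (0 < (2 * (q - 1) * mu - N * (mu - 1)) * (t - A + l * A)) by (apply Rmult_lt_0_compat; lra).
      lra. }
    assert (2 * mu * (t - A + l * A) * (r * t) - (L * (r * t) + (2 * (q - 1) * mu - N * (mu - 1)) * (t - A + l * A))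
            = F * (t - A + l * A) - L * (r * t)).
    { replace (r * t) with (q + A) by lra. unfold F. rewrite HAdef. field. }
    assert (F * t <= F * (t - A + l * A)) by (apply Rmult_le_compat_l; lra).
    assert (L * r * t < F * t) by (apply Rmult_lt_compat_r; lra).
    assert (L * (r * t) = L * r * t) by ring. lra. }
Qed.
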